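(* Let $G_1,\ldots,G_p$ be positive (entrywise) real $m\times n$ matrices, let $R_1,\ldots,R_p$ be positive real $m$-vectors and $C_1,\ldots,C_p$ positive real $n$-vectors such that $|R_1|=\cdots=|R_p|=|C_1|=\cdots=|C_p|$. Let $\alpha_1,\ldots,\alpha_p\ge0$ with $\sum_k\alpha_k=1$, and set $G=\sum_k\alpha_kG_k$, $R=\sum_k\alpha_kR_k$, $C=\sum_k\alpha_kC_k$. Then $$f(G;R,C)\ \ge\ \prod_{k=1}^p f^{\alpha_k}(G_k;R_k,C_k).$$
   Context: For a vector $B=(b_1,\ldots,b_l)$, $|B|=\sum_i b_i$. For a positive $m\times n$ matrix $G=(g_{ij})$ and vectors $x=(\xi_1,\ldots,\xi_m)$, $y=(\eta_1,\ldots,\eta_n)$, let $F(G;x,y)=\sum_{i=1}^m\sum_{j=1}^n g_{ij}\xi_i\eta_j$. For positive vectors $R=(r_1,\ldots,r_m)$, $C=(c_1,\ldots,c_n)$, let $f(G;R,C)$ be the minimum of $F(G;x,y)$ over all $x\in\mathbb{R}_{>0}^m$, $y\in\mathbb{R}_{>0}^n$ with $\prod_{i=1}^m\xi_i^{r_i}=\prod_{j=1}^n\eta_j^{c_j}=1$ (this minimum is attained). *)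

(* Defs.v *)
From HB Require Import structures.
From mathcomp Require Import all_boot all_order all_algebra.
From mathcomp Require Import all_classical all_reals all_analysis.
Set Implicit Arguments. Unset Strict Implicit. Unset Printing Implicit Defensive.
Import Order.TTheory GRing.Theory Num.Theory.
Local Open Scope classical_set_scope.
Local Open Scope ring_scope.

Definition vsum (R : realType) (l : nat) (B : 'I_l -> R) : R := \sum_(i < l) B i.

Definition Fform (R : realType) (m n : nat) (G : 'M[R]_(m, n))
  (x : 'I_m -> R) (y : 'I_n -> R) : R :=
  \sum_(i < m) \sum_(j < n) G i j * x i * y j.

Definition feasible (R : realType) (l : nat) (r : 'I_l -> R) (x : 'I_l -> R) : Prop :=
  (forall i, 0 < x i) /\ \prod_(i < l) (x i `^ r i) = 1.

(* f(G;R,C): the minimum (which is attained, hence equal to the infimum)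
   of F(G;x,y) over feasible x, y. *)
Definition fmin (R : realType) (m n : nat) (G : 'M[R]_(m, n))
  (r : 'I_m -> R) (c : 'I_n -> R) : R :=
  inf [set Fform G x y | x in [set x | feasible r x] & y in [set y | feasible c y]].

(* Main.v *)
Require Import Defs.
From HB Require Import structures.
From mathcomp Require Import all_boot all_order all_algebra.
From mathcomp Require Import all_classical all_reals all_analysis.
Import Order.TTheory GRing.Theory Num.Theory.
Local Open Scope classical_set_scope.
Local Open Scope ring_scope.

Set Implicit Arguments.
Section H.
Variable R : realType.

Lemma powR_pos (z r : R) : 0 < z -> z `^ r = expR (r * ln z).
Proof. by move=> z0; rewrite /powR gt_eqF. Qed.

Lemma prod_powR_exp l (r x : 'I_l -> R) : (forall i, 0 < x i) ->
  \prod_(i < l) (x i `^ r i) = expR (\sum_(i < l) r i * ln (x i)).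
Proof.
move=> hx; rewrite expR_sum; apply: eq_bigr => i _; exact: powR_pos.
Qed.

Lemma feasible_ln l (r x : 'I_l -> R) : feasible r x ->
  \sum_(i < l) r i * ln (x i) = 0.
Proof.
move=> [hx hp]; apply: expR_inj; rewrite expR0 -hp prod_powR_exp //.
Qed.

Lemma feasible_of_ln l (r x : 'I_l -> R) : (forall i, 0 < x i) ->
  \sum_(i < l) r i * ln (x i) = 0 -> feasible r x.
Proof.
by move=> hx hs; split => //; rewrite prod_powR_exp // hs expR0.
Qed.

Lemma feasible1 l (r : 'I_l -> R) : feasible r (fun=> 1).
Proof.
split => [i|]; first exact: ltr01.
by rewrite big1 // => i _; rewrite powR1.
Qed.

Lemma Fform_ge0 m n (G : 'M[R]_(m, n)) x y :
  (forall i j, 0 <= G i j) -> (forall i, 0 < x i) -> (forall j, 0 < y j) ->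
  0 <= Fform G x y.
Proof.
move=> hG hx hy; apply: sumr_ge0 => i _; apply: sumr_ge0 => j _.
by rewrite !mulr_ge0 // ltW.
Qed.

Lemma fmin_nonempty m n (G : 'M[R]_(m, n)) (r : 'I_m -> R) (c : 'I_n -> R) :
  [set Fform G x y | x in [set x | feasible r x] & y in [set y | feasible c y]] !=set0.
Proof.
exists (Fform G (fun=> 1) (fun=> 1)); exists (fun=> 1); first exact: feasible1.
by exists (fun=> 1); first exact: feasible1.
Qed.

Lemma fmin_ge0 m n (G : 'M[R]_(m, n)) r c :
  (forall i j, 0 <= G i j) -> 0 <= fmin G r c.
Proof.
move=> hG; apply: lb_le_inf; first exact: fmin_nonempty.
move=> _ [x [hx _] [y [hy _] <-]]; exact: Fform_ge0.
Qed.

Lemma fmin_le m n (G : 'M[R]_(m, n)) r c x y :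
  (forall i j, 0 <= G i j) -> feasible r x -> feasible c y ->
  fmin G r c <= Fform G x y.
Proof.
move=> hG fx fy; apply: ge_inf; last by exists x => //; exists y.
exists 0 => _ [x' [hx _] [y' [hy _] <-]]; exact: Fform_ge0.
Qed.

Lemma sum_ord_gt0 l (F : 'I_l.+1 -> R) : (forall i, 0 < F i) -> 0 < \sum_(i < l.+1) F i.
Proof.
move=> hF; rewrite big_ord_recl; apply: ltr_pwDl => //.
by apply: sumr_ge0 => i _; exact: ltW.
Qed.

End H.
Unset Implicit Arguments.
From mathcomp Require Import ring.
Local Open Scope ring_scope.
Theorem lemma4p2 (R : realType) (m n p : nat)
  (Gs : 'I_p -> 'M[R]_(m, n)) (Rs : 'I_p -> 'I_m -> R) (Cs : 'I_p -> 'I_n -> R)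
  (alpha : 'I_p -> R)
  (hG : forall k i j, 0 < Gs k i j)
  (hR : forall k i, 0 < Rs k i)
  (hC : forall k j, 0 < Cs k j)
  (hsum : exists s : R, forall k, vsum (Rs k) = s /\ vsum (Cs k) = s)
  (halpha : forall k, 0 <= alpha k)
  (halpha1 : \sum_(k < p) alpha k = 1) :
  let G := \sum_(k < p) alpha k *: Gs k in
  let Rv := fun i => \sum_(k < p) alpha k * Rs k i in
  let Cv := fun j => \sum_(k < p) alpha k * Cs k j in
  \prod_(k < p) (fmin (Gs k) (Rs k) (Cs k) `^ alpha k) <= fmin G Rv Cv.
Proof.
rewrite /=.
have hGk0 : forall k i j, 0 <= Gs k i j by move=> k i j; exact: ltW.
have hG0 : forall i j, 0 <= (\sum_(k < p) alpha k *: Gs k) i j.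
  move=> i j; rewrite summxE; apply: sumr_ge0 => k _.
  by rewrite mxE mulr_ge0 // ltW.
set G := \sum_(k < p) alpha k *: Gs k in hG0 *.
set Rv := (fun i : 'I_m => \sum_(k < p) alpha k * Rs k i).
set Cv := (fun j : 'I_n => \sum_(k < p) alpha k * Cs k j).
have [k0 ak0] : exists k, alpha k != 0.
  apply/existsP; apply: contraT; rewrite negb_exists => /forallP h.
  move: halpha1; rewrite big1 => [/eqP|k _]; first by rewrite eq_sym oner_eq0.
  by apply/eqP; move: (h k); rewrite negbK.
have degen : (m = 0 \/ n = 0)%N ->
  \prod_(k < p) (fmin (Gs k) (Rs k) (Cs k) `^ alpha k) <= fmin G Rv Cv.
  move=> mn0.
  have F0 : forall (H : 'M[R]_(m, n)) x y, Fform H x y = 0.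
    move=> H x y; rewrite /Fform; case: mn0 => [e|e].
      by move: x y H; rewrite e => x y H; rewrite big_ord0.
    by apply: big1 => i _; move: y H; rewrite e => y H; rewrite big_ord0.
  have f0 : forall k, fmin (Gs k) (Rs k) (Cs k) = 0.
    move=> k; apply/eqP; rewrite eq_le fmin_ge0 // andbT.
    by rewrite -(F0 (Gs k) (fun=> 1) (fun=> 1)); apply: fmin_le => //; apply: feasible1.
  rewrite (bigD1 k0) //= f0 powR0 // mul0r; exact: fmin_ge0.
have [m0|[m' em]] : (m = 0 \/ exists m', m = m'.+1)%N.
  by case: (m) => [|m']; [left|right; exists m'].
  by apply: degen; left.
have [n0|[n' en]] : (n = 0 \/ exists n', n = n'.+1)%N.
  by case: (n) => [|n']; [left|right; exists n'].
  by apply: degen; right.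
subst m n; clear degen.
apply: lb_le_inf; first exact: fmin_nonempty.
move=> _ [x fx [y fy <-]].
have [sv hs] := hsum.
have s0 : 0 < sv.
  have [<- _] := hs k0; rewrite /vsum; exact: sum_ord_gt0.
have hsR : forall k, \sum_(i < m'.+1) Rs k i = sv by move=> k; have [<- _] := hs k.
have hsC : forall k, \sum_(j < n'.+1) Cs k j = sv by move=> k; have [_ <-] := hs k.
have [hx _] := fx; have [hy _] := fy.
pose U k := (\sum_(i < m'.+1) Rs k i * ln (x i)) / sv.
pose V k := (\sum_(j < n'.+1) Cs k j * ln (y j)) / sv.
pose a k := Fform (Gs k) x y.
have ha : forall k, 0 < a k.
  move=> k; rewrite /a /Fform; apply: sum_ord_gt0 => i; apply: sum_ord_gt0 => j.
  by rewrite !mulr_gt0.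
have fxk : forall k, feasible (Rs k) (fun i => x i * expR (- U k)).
  move=> k; apply: feasible_of_ln => [i|]; first by rewrite mulr_gt0 ?expR_gt0.
  under eq_bigr => i _ do rewrite lnM ?posrE ?expR_gt0 // expRK mulrDr.
  rewrite big_split /= -big_distrl /= hsR /U mulrN [sv * _]mulrC divfK ?gt_eqF //.
  by rewrite subrr.
have fyk : forall k, feasible (Cs k) (fun j => y j * expR (- V k)).
  move=> k; apply: feasible_of_ln => [j|]; first by rewrite mulr_gt0 ?expR_gt0.
  under eq_bigr => j _ do rewrite lnM ?posrE ?expR_gt0 // expRK mulrDr.
  rewrite big_split /= -big_distrl /= hsC /V mulrN [sv * _]mulrC divfK ?gt_eqF //.
  by rewrite subrr.
have step1 : forall k, fmin (Gs k) (Rs k) (Cs k) <= a k * expR (- (U k + V k)).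
  move=> k; apply: le_trans (@fmin_le _ _ _ (Gs k) _ _ _ _ (hGk0 k) (fxk k) (fyk k)) _.
  rewrite le_eqVlt; apply/orP; left; apply/eqP.
  rewrite /a /Fform big_distrl /=; apply: eq_bigr => i _; rewrite big_distrl /=; apply: eq_bigr => j _.
  rewrite opprD expRD; ring.
have hU : \sum_(k < p) alpha k * U k = 0.
  rewrite /U; under eq_bigr => k _ do rewrite mulrA; rewrite -big_distrl /=.
  under eq_bigr => k _ do rewrite big_distrr; rewrite exchange_big /=.
  rewrite [X in X / _](_ : _ = \sum_(i < m'.+1) Rv i * ln (x i)).
    by rewrite (feasible_ln fx) mul0r.
  by apply: eq_bigr => i _; rewrite /Rv big_distrl; apply: eq_bigr => k _; rewrite mulrA.
have hV : \sum_(k < p) alpha k * V k = 0.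
  rewrite /V; under eq_bigr => k _ do rewrite mulrA; rewrite -big_distrl /=.
  under eq_bigr => k _ do rewrite big_distrr; rewrite exchange_big /=.
  rewrite [X in X / _](_ : _ = \sum_(j < n'.+1) Cv j * ln (y j)).
    by rewrite (feasible_ln fy) mul0r.
  by apply: eq_bigr => j _; rewrite /Cv big_distrl; apply: eq_bigr => k _; rewrite mulrA.
pose S := \sum_(k < p) alpha k * ln (a k).
have step2 : \prod_(k < p) fmin (Gs k) (Rs k) (Cs k) `^ alpha k <= expR S.
  apply: (@le_trans _ _ (\prod_(k < p) (a k * expR (- (U k + V k))) `^ alpha k)).
    apply: ler_prod => k _; rewrite powR_ge0 /=; apply: ge0_ler_powR => //.
      by rewrite nnegrE; apply: fmin_ge0.
    by rewrite nnegrE mulr_ge0 // ?expR_ge0 // ltW.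
  rewrite le_eqVlt; apply/orP; left; apply/eqP.
  have -> : S = \sum_(k < p) alpha k * (ln (a k) + - (U k + V k)).
    under [RHS]eq_bigr => k _ do rewrite mulrDr mulrN mulrDr.
    by rewrite big_split /= sumrN big_split /= hU hV addr0 oppr0 addr0.
  rewrite expR_sum; apply: eq_bigr => k _.
  by rewrite powR_pos ?mulr_gt0 ?expR_gt0 // lnM ?posrE ?expR_gt0 // expRK.
have step3 : expR S <= \sum_(k < p) alpha k * a k.
  have h1 : \sum_(k < p) alpha k * (1 + (ln (a k) - S)) <=
            \sum_(k < p) alpha k * (a k * expR (- S)).
    apply: ler_sum => k _; apply: ler_wpM2l => //.
    have e : expR (ln (a k)) = a k by rewrite lnK // posrE.
    by rewrite -[X in X * _]e -expRD; apply: expR_ge1Dx.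
  have e1 : \sum_(k < p) alpha k * (1 + (ln (a k) - S)) = 1.
    under eq_bigr => k _ do rewrite mulrDr mulr1 mulrBr.
    by rewrite big_split /= halpha1 sumrB -/S -big_distrl /= halpha1 mul1r subrr addr0.
  rewrite e1 in h1.
  have e2 : \sum_(k < p) alpha k * (a k * expR (- S)) = (\sum_(k < p) alpha k * a k) * expR (- S).
    by rewrite big_distrl /=; apply: eq_bigr => k _; rewrite mulrA.
  rewrite e2 in h1.
  have := ler_wpM2l (ltW (expR_gt0 S)) h1.
  by rewrite mulr1 mulrCA -expRD subrr expR0 mulr1.
have step4 : Fform G x y = \sum_(k < p) alpha k * a k.
  rewrite /a /Fform; symmetry; under eq_bigr => k _ do rewrite big_distrr; rewrite exchange_big /=.
  apply: eq_bigr => i _; under eq_bigr => k _ do rewrite big_distrr; rewrite exchange_big /=.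
  apply: eq_bigr => j _; rewrite /G summxE !big_distrl /=; apply: eq_bigr => k _.
  rewrite mxE; ring.
by rewrite step4; apply: le_trans step2 step3.
Qed.
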